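(* Let $g$ be any connected undirected graph with $n$ processors and diameter $diam(g)$, with unique identifiers $id_v \in \{0,\dots,n-1\}$. The protocol $\mathcal{EMSS}$ is self-stabilizing for the mutual exclusion specification $spec_{EM}$ under the unfair distributed daemon $did$.
   Context: Model (state model with shared variables): a distributed system is a connected undirected graph $g=(V,E)$ whose vertices are processors and edges are communication links; $vois(v)$ is the set of neighbours of $v$; $n=|V|$; $diam(g)$ is the diameter of $g$. Each processor $v$ has a unique identity $id_v\in\{0,\dots,n-1\}$. The state of a processor is the value of its variables; a configuration is the tuple of all processor states. A protocol is a set of rules $\langle guard\rangle \to \langle action\rangle$, where the guard is a predicate on the state of the processor and of its neighbours and the action updates the processor's own state. A processor is enabled if one of its guards is true. In a step, a daemon selects a nonempty subset of the enabled processors, and each selected processor atomically executes the action of a true guard, all selected processors reading the configuration at the beginning of the step. An execution is a maximal sequence of configurations linked by steps. The unfair distributed daemon $did$ imposes no constraint on the (nonempty) selected set. The synchronous daemon $ds$ selects all enabled processors at every step. Self-stabilization: a protocol $\pi$ is self-stabilizing for a specification $spec$ under daemon $d$ if, from any configuration, every execution of $\pi$ under $d$ contains a configuration from which every execution of $\pi$ under $d$ satisfies $spec$. Mutual exclusion: each processor $v$ has a predicate $privilege_v$; $v$ is privileged in a configuration $\gamma$ iff $privilege_v$ is true in $\gamma$; if $v$ is privileged in $\gamma$ and is activated during step $(\gamma,\gamma')$, then $v$ executes its critical section during that step. An execution satisfies $spec_{EM}$ if in every configuration at most one processor is privileged (safety) and every processor executes its critical section infinitely often (liveness). Protocol $\mathcal{EMSS}$.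 Let $K=(2n-1)(diam(g)+1)+2$. Bounded clock: the set $H=\{-n,-n+1,\dots,0,\dots,K-1\}$ with increment $\phi(c)=c+1$ if $c<0$ and $\phi(c)=(c+1)\bmod K$ if $c\ge 0$. For an integer $c$ let $\overline{c}\in\{0,\dots,K-1\}$ with $c\equiv \overline c \pmod K$; $d_K(c,c')=\min\{\overline{c-c'},\overline{c'-c}\}$; $c\le_l c'$ iff $0\le \overline{c'-c}\le 1$. Let $init=\{-n,\dots,0\}$, $init^*=\{-n,\dots,-1\}$, $stab=\{0,\dots,K-1\}$, and $\le_{init}$ the usual order of integers on $init$. Each processor $v$ has one variable $r_v\in H$. Predicates: $privilege_v \equiv (r_v = 2n + 2\,diam(g)\,id_v)$; $correct_v(u)\equiv (r_v\in stab)\wedge(r_u\in stab)\wedge(d_K(r_v,r_u)\le 1)$; $tousCorrects_v\equiv \forall u\in vois(v),\ correct_v(u)$; $etapeNorm_v\equiv tousCorrects_v\wedge \forall u\in vois(v),\ r_v\le_l r_u$; $reInit_v\equiv \neg tousCorrects_v \wedge r_v\notin init$; $etapeConv_v\equiv r_v\in init^*\wedge \forall u\in vois(v),\ (r_u\in init \wedge r_v\le_{init} r_u)$. Rules: $NA:: etapeNorm_v \to r_v:=\phi(r_v)$; $CA:: etapeConv_v\to r_v:=\phi(r_v)$; $RA:: reInit_v\to r_v:=-n$. *)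

(* Defs.v *)
From mathcomp Require Import all_boot.
From Stdlib Require Import ZArith.

Set Implicit Arguments.
Unset Strict Implicit.
Unset Printing Implicit Defensive.

Section EMSS.

(* The graph g = (V,E): V = T, E = e (symmetric, irreflexive).
   vois(v) = [pred u | e v u]. *)
Variables (T : finType) (e : rel T).

Fixpoint reach (k : nat) (u v : T) : bool :=
  match k with
  | 0 => u == v
  | k'.+1 => reach k' u v || [exists w, reach k' u w && e w v]
  end.

(* shortest-path distance (for a connected graph it is < #|T|) *)
Definition dist (u v : T) : nat := find (fun k => reach k u v) (iota 0 #|T|).

Definition diam : nat := \max_(u : T) \max_(v : T) dist u v.

Variable ident : T -> 'I_#|T|.

Definition config := T -> Z.

Definition nZ : Z := Z.of_nat #|T|.
Definition KZ : Z := ((2 * nZ - 1) * (Z.of_nat diam + 1) + 2)%Z.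

Definition inH (c : Z) : Prop := (- nZ <= c <= KZ - 1)%Z.
Definition valid_config (g : config) : Prop := forall v, inH (g v).

Definition phi (c : Z) : Z := if (c <? 0)%Z then (c + 1)%Z else ((c + 1) mod KZ)%Z.

Definition dK (c c' : Z) : Z := Z.min ((c - c') mod KZ) ((c' - c) mod KZ).
Definition le_l (c c' : Z) : Prop := (0 <= (c' - c) mod KZ <= 1)%Z.

Definition in_init (c : Z) : Prop := (- nZ <= c <= 0)%Z.
Definition in_init_star (c : Z) : Prop := (- nZ <= c <= -1)%Z.
Definition in_stab (c : Z) : Prop := (0 <= c <= KZ - 1)%Z.

Definition privilege (g : config) (v : T) : Prop :=
  g v = (2 * nZ + 2 * Z.of_nat diam * Z.of_nat (nat_of_ord (ident v)))%Z.

Definition correct (g : config) (v u : T) : Prop :=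
  in_stab (g v) /\ in_stab (g u) /\ (dK (g v) (g u) <= 1)%Z.

Definition tousCorrects (g : config) (v : T) : Prop :=
  forall u, e v u -> correct g v u.

Definition etapeNorm (g : config) (v : T) : Prop :=
  tousCorrects g v /\ forall u, e v u -> le_l (g v) (g u).

Definition reInit (g : config) (v : T) : Prop :=
  ~ tousCorrects g v /\ ~ in_init (g v).

Definition etapeConv (g : config) (v : T) : Prop :=
  in_init_star (g v) /\
  forall u, e v u -> in_init (g u) /\ (g v <= g u)%Z.

Definition enabled (g : config) (v : T) : Prop :=
  etapeNorm g v \/ etapeConv g v \/ reInit g v.

(* r' is the result of executing the action of a true guard of v in g
   (rules NA, CA, RA) *)
Definition action_result (g : config) (v : T) (r' : Z) : Prop :=
  (etapeNorm g v /\ r' = phi (g v)) \/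
  (etapeConv g v /\ r' = phi (g v)) \/
  (reInit g v /\ r' = (- nZ)%Z).

Definition step_did (g : config) (S : {set T}) (g' : config) : Prop :=
  S != set0 /\
  (forall v, v \in S -> enabled g v) /\
  (forall v, v \in S -> action_result g v (g' v)) /\
  (forall v, v \notin S -> g' v = g v).

Definition terminal (g : config) : Prop := forall v, ~ enabled g v.

(* A finite (maximal) execution ends in a terminal
   configuration; it is encoded by stuttering forever on that configuration
   with empty activated sets (no critical section is executed then). *)
Definition execution_did (c : nat -> config) (s : nat -> {set T}) : Prop :=
  forall i, step_did (c i) (s i) (c i.+1) \/
            (terminal (c i) /\ s i = set0 /\ c i.+1 = c i).

Definition executes_cs (c : nat -> config) (s : nat -> {set T}) (i : nat) (v : T)
  : Prop := privilege (c i) v /\ v \in s i.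

Definition spec_EM (c : nat -> config) (s : nat -> {set T}) : Prop :=
  (forall i, forall v w, privilege (c i) v -> privilege (c i) w -> v = w) /\
  (forall v, forall i, exists j, (i <= j)%N /\ executes_cs c s j v).

Definition self_stabilizing_EMSS_did : Prop :=
  forall (c : nat -> config) (s : nat -> {set T}),
    valid_config (c 0) -> execution_did c s ->
    exists i, forall (c' : nat -> config) (s' : nat -> {set T}),
      c' 0 = c i -> execution_did c' s' -> spec_EM c' s'.

End EMSS.

(* Main.v *)
Require Import Defs.
From mathcomp Require Import all_boot.
From Stdlib Require Import ZArith NArith Lia.
From Stdlib Require Import Classical ClassicalEpsilon.
From mathcomp Require Import zify.

Set Implicit Arguments.
Unset Strict Implicit.
Unset Printing Implicit Defensive.

Ltac zif := repeat match goal with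
 | |- context [if (?a <? ?b)%Z then _ else _] => case: (Z.ltb_spec0 a b) => ?
 | |- context [if (?a =? ?b)%Z then _ else _] => case: (Z.eqb_spec a b) => ?
 | |- context [if (?a <=? ?b)%Z then _ else _] => case: (Z.leb_spec0 a b) => ?
 end.

Section Graph.
Variables (T : finType) (e : rel T).

Lemma reachS k u v : reach e k.+1 u v = reach e k u v || [exists w, reach e k u w && e w v].
Proof. by []. Qed.

Lemma reach_cons k x y z : e x y -> reach e k y z -> reach e k.+1 x z.
Proof.
move=> exy; elim: k z => [|k IH] z.
- move=> h; have hyz : y = z by apply/eqP. subst z. rewrite reachS. apply/orP; right; apply/existsP; exists x. by rewrite /= eqxx exy.
- rewrite reachS => /orP [h|/existsP [w /andP [h1 h2]]].
  + rewrite reachS. by rewrite (IH z h).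
  + rewrite reachS. apply/orP; right; apply/existsP; exists w. by rewrite (IH w h1) h2.
Qed.

Lemma reach_path x p : path e x p -> reach e (size p) x (last x p).
Proof.
elim: p x => [|y p IH] x /=; first by rewrite eqxx.
case/andP => h1 h2. exact: reach_cons h1 (IH y h2).
Qed.

Lemma reach_ex u w : connect e u w -> exists k, (k < #|T|)%nat /\ reach e k u w.
Proof.
case/connectP => p hp ->.
case: (shortenP hp) => p' hp' hu _.
exists (size p'); split; last exact: reach_path.
have := card_uniqP hu. move=> h. have := max_card (mem (u :: p')).
by rewrite h.
Qed.

Lemma reach_dist u w : connect e u w -> reach e (dist e u w) u w.
Proof.
move=> huw. have [k [hk hr]] := reach_ex huw.
have hh : has (fun k => reach e k u w) (iota 0 #|T|).
{ apply/hasP; exists k => //; by rewrite mem_iota. }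
have hf : (find (fun k => reach e k u w) (iota 0 #|T|) < #|T|)%nat.
{ by rewrite -[X in (_ < X)%nat](size_iota 0 #|T|) -has_find. }
have := nth_find 0%nat hh. by rewrite nth_iota // add0n.
Qed.

Lemma dist_diam u w : (dist e u w <= diam e)%nat.
Proof.
rewrite /diam. apply: leq_trans (leq_bigmax u). exact: (leq_bigmax (F := fun v => dist e u v) w).
Qed.

End Graph.

Section Arith.
Variables (T : finType) (e : rel T).
Hypothesis n_pos : (0 < #|T|)%nat.
Local Notation n := (nZ T).
Local Notation K := (KZ e).
Local Open Scope Z_scope.

Lemma n_ge1 : 1 <= n.
Proof. rewrite /nZ. have := n_pos. move/ltP. lia. Qed.

Lemma K3 : 3 <= K.
Proof. rewrite /KZ. have := n_ge1. have : 0 <= Z.of_nat (diam e) by lia. nia. Qed.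

Lemma modK z : -K <= z < K -> (0 <= z /\ z mod K = z) \/ (z < 0 /\ z mod K = z + K).
Proof.
move=> hz. have hK := K3.
case: (Z.lt_ge_cases z 0) => hz0.
- right; split => //. rewrite -(Z.mod_add z 1 K); last lia.
  rewrite Z.mul_1_l; apply: Z.mod_small; lia.
- left; split => //; apply: Z.mod_small; lia.
Qed.

Definition nxt (a : Z) : Z := if (a =? K - 1) then 0 else a + 1.

Lemma phi_stab a : 0 <= a <= K - 1 -> phi e a = nxt a.
Proof.
move=> ha. have hK := K3. rewrite /phi /nxt.
have -> : (a <? 0) = false by apply/Z.ltb_ge; lia.
case: Z.eqb_spec => h.
- rewrite h. have -> : K - 1 + 1 = K by lia. apply: Z.mod_same; lia.
- apply: Z.mod_small; lia.
Qed.

Lemma phi_neg a : a < 0 -> phi e a = a + 1.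
Proof. move=> ha; rewrite /phi. by have -> : (a <? 0) = true by apply/Z.ltb_lt. Qed.

Lemma phi_ge0 a : 0 <= a -> 0 <= phi e a <= K - 1.
Proof.
move=> ha; have hK := K3; rewrite /phi.
have -> : (a <? 0) = false by apply/Z.ltb_ge; lia.
have := Z.mod_pos_bound (a + 1) K. lia.
Qed.

Lemma lel_char a b : 0 <= a <= K - 1 -> 0 <= b <= K - 1 ->
  (le_l e a b <-> b = a \/ b = nxt a).
Proof.
move=> ha hb; have hK := K3; rewrite /le_l /nxt.
have := modK (z := b - a). case; first lia; case=> h1 ->; case: Z.eqb_spec; lia.
Qed.

Lemma dK_char a b : 0 <= a <= K - 1 -> 0 <= b <= K - 1 ->
  (dK e a b <= 1 <-> b = a \/ b = nxt a \/ a = nxt b).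
Proof.
move=> ha hb; have hK := K3; rewrite /dK /nxt.
have := modK (z := b - a). case; first lia; case=> h1 ->;
have := modK (z := a - b); (case; first lia); case=> h2 ->;
case: Z.eqb_spec; case: Z.eqb_spec; lia.
Qed.


Lemma nxt_spec a : 0 <= a <= K - 1 ->
  (a = K - 1 /\ nxt a = 0) \/ (a < K - 1 /\ nxt a = a + 1).
Proof. move=> ha; rewrite /nxt; case: Z.eqb_spec; lia. Qed.

Definition trans (g g' : config T) (v : T) :=
  g' v = g v \/ action_result e g v (g' v).

Definition valid (g : config T) := forall v, - n <= g v <= K - 1.

Lemma drop g g' x : trans g g' x -> g' x < 0 -> 0 <= g x -> 0 < g x /\ g' x = - n.
Proof.
move=> [->|]; first lia.
case=> [[_ ->]|[[_ ->]|[[_ hI] ->]]] h1 h2.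
- have := phi_ge0 h2; lia.
- have := phi_ge0 h2; lia.
- split => //. rewrite /in_init in hI. have := n_ge1. lia.
Qed.

Lemma noPos g g' v u : trans g g' v -> e v u -> g u < 0 -> g v <= 0 -> g' v <= 0.
Proof.
move=> [->|] // + evu hu hv.
case=> [[[hT _] ->]|[[[hC _] ->]|[_ ->]]].
- have := hT u evu; rewrite /correct /in_stab; lia.
- rewrite phi_neg; rewrite /in_init_star in hC; lia.
- have := n_ge1; lia.
Qed.

Lemma frozen_step g g' u v : valid g -> trans g g' u -> e u v -> g u < 0 -> 0 < g v ->
  g' u = g u.
Proof.
move=> hval [->|] // + euv hu hv.
case=> [[[hT _] ->]|[[[_ hC] ->]|[[_ hI] ->]]].
- have := hT v euv; rewrite /correct /in_stab; lia.
- have := hC v euv; rewrite /in_init; lia.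
- exfalso; apply: hI; rewrite /in_init; have := hval u; lia.
Qed.

Lemma init_mono g g' v : valid g -> trans g g' v -> g v <= 0 -> g v <= g' v.
Proof.
move=> hval [->|]; first lia.
case=> [[_ ->]|[[_ ->]|[[_ hI] ->]]] hv.
- case: (Z.lt_ge_cases (g v) 0) => h; first (rewrite phi_neg; lia).
  have := phi_ge0 h; lia.
- case: (Z.lt_ge_cases (g v) 0) => h; first (rewrite phi_neg; lia).
  have := phi_ge0 h; lia.
- exfalso; apply: hI; rewrite /in_init; have := hval v; lia.
Qed.

Lemma localC g g' u v : valid g -> valid g' -> trans g g' u -> trans g g' v -> e u v ->
  g v <= 0 -> g' v <= 0 -> g u <= g v + 1 -> g' u <= g' v + 1.
Proof.
move=> hval hval' tu tv euv hv hv' huv.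
have hm := init_mono hval tv hv. have hK := K3.
case: tu => [->|]; first lia.
case=> [[[hT hL] ->]|[[[hC hC2] ->]|[_ ->]]].
- have := hT v euv; rewrite /correct /in_stab => -[hs1 [hs2 _]].
  have := (lel_char hs1 hs2).1 (hL v euv).
  rewrite phi_stab //. have := nxt_spec hs1. lia.
- rewrite /in_init_star in hC. rewrite phi_neg; last lia.
  have := hC2 v euv; lia.
- have := hval' v; lia.
Qed.

Lemma stab_keep g g' x : trans g g' x -> 0 <= g x <= K - 1 -> 0 <= g' x ->
  g' x = g x \/ (etapeNorm e g x /\ g' x = phi e (g x)).
Proof.
move=> [->|]; first by left.
case=> [[hN ->]|[[[hC _] ->]|[_ ->]]] hx hx'; first by right.
- rewrite /in_init_star in hC; lia.
- have := n_ge1; lia.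
Qed.

Hypothesis e_sym : symmetric e.
Hypothesis e_conn : forall u v : T, connect e u v.

Lemma good_pres g g' v w : e v w -> correct e g v w ->
  (g' v = g v \/ (etapeNorm e g v /\ g' v = phi e (g v))) ->
  (g' w = g w \/ (etapeNorm e g w /\ g' w = phi e (g w))) ->
  correct e g' v w.
Proof.
move=> evw [ha [hb hd]] hv hw.
have ewv : e w v by rewrite e_sym.
rewrite /in_stab in ha hb.
have hc := (dK_char ha hb).1 hd.
have hK := K3.
have sa := nxt_spec ha. have sb := nxt_spec hb.
rewrite /correct /in_stab.
case: hv => [hv|[[_ hLv] hv]]; case: hw => [hw|[[_ hLw] hw]].
- rewrite hv hw; split; [lia|split; [lia|]]; apply/(dK_char ha hb); lia.
- have := (lel_char hb ha).1 (hLw v ewv).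
  rewrite hv hw phi_stab // => hlw.
  have hn : 0 <= nxt (g w) <= K - 1 by lia.
  split; [lia|split; [lia|]]; apply/(dK_char ha hn); have := nxt_spec hn; lia.
- have := (lel_char ha hb).1 (hLv w evw).
  rewrite hv hw phi_stab // => hlv.
  have hn : 0 <= nxt (g v) <= K - 1 by lia.
  split; [lia|split; [lia|]]; apply/(dK_char hn hb); have := nxt_spec hn; lia.
- have := (lel_char hb ha).1 (hLw v ewv).
  have := (lel_char ha hb).1 (hLv w evw).
  rewrite hv hw !phi_stab // => hlv hlw.
  have hn : 0 <= nxt (g v) <= K - 1 by lia.
  have hn2 : 0 <= nxt (g w) <= K - 1 by lia.
  split; [lia|split; [lia|]]; apply/(dK_char hn hn2).
  have := nxt_spec hn; have := nxt_spec hn2; lia.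
Qed.


Lemma K_gt_n : n < K.
Proof. rewrite /KZ. have := n_ge1. have : 0 <= Z.of_nat (diam e) by lia. nia. Qed.

Lemma ex_argmin (F : T -> nat) (v0 : T) : exists v, forall w, (F v <= F w)%nat.
Proof. case: (@arg_minnP T v0 xpredT F isT) => v _ h; exists v => w; exact: h. Qed.

Lemma missing (g : config T) : exists c0, 0 <= c0 <= K-1 /\ forall v, g v <> c0.
Proof.
apply: NNPP => hn.
have H : forall i : 'I_(Z.to_nat K), exists v, g v = Z.of_nat i.
{ move=> i. apply: NNPP => hi. apply: hn. exists (Z.of_nat i). split.
  - have := ltn_ord i; move/ltP; have := K3; lia.
  - move=> v hv; apply: hi; by exists v. }
pose f i := proj1_sig (constructive_indefinite_description _ (H i)).
have hf : forall i, g (f i) = Z.of_nat i :=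
  fun i => proj2_sig (constructive_indefinite_description _ (H i)).
have inj : injective f.
{ move=> i j hij. apply: val_inj => /=. have := hf i; rewrite hij hf. lia. }
have := leq_card f inj. rewrite card_ord. move/leP. have := K_gt_n. rewrite /nZ. lia.
Qed.

Lemma correct_sym g v u : correct e g v u -> correct e g u v.
Proof. rewrite /correct /dK; case=> [h1 [h2 h3]]; split => //; split => //; lia. Qed.

Lemma DF g : valid g -> exists v, enabled e g v.
Proof.
move=> hval.
have [v0 _] : exists v : T, True.
{ move: n_pos => /card_gt0P [v _]; by exists v. }
case: (classic (exists v, g v < 0)) => [[vn hvn]|hpos].
- have [v hmin] := ex_argmin (fun v => Z.to_nat (g v + n)) v0.
  have hle : forall w, g v <= g w.
  { move=> w; have := hmin w; move/leP; have := hval v; have := hval w; lia. }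
  case: (classic (forall u, e v u -> in_init T (g u))) => [hall|].
  + exists v; right; left; split.
    * rewrite /in_init_star; have := hle vn; have := hval v; lia.
    * move=> u hu; split; [exact: hall|exact: hle].
  + move=> hn0; have [u hu'] := not_all_ex_not _ _ hn0.
    have [hu hni] := imply_to_and _ _ hu'.
    exists u; right; right; split => // hT.
    have := hT v; rewrite e_sym => /(_ hu); rewrite /correct /in_stab.
    have := hle vn. lia.
- have hge : forall v, 0 <= g v.
  { move=> v; apply: NNPP => h; apply: hpos; exists v; lia. }
  case: (classic (forall v, tousCorrects e g v)) => [hall|].
  + have [c0 [hc0 hmiss]] := missing g.
    pose key y := if c0 <? y then y - c0 - 1 else y - c0 - 1 + K.
    have [v hmin] := ex_argmin (fun v => Z.to_nat (key (g v))) v0.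
    exists v; left; split; first exact: hall.
    move=> u hu.
    have hsv : 0 <= g v <= K - 1 by have := hval v; have := hge v; lia.
    have hsu : 0 <= g u <= K - 1 by have := hval u; have := hge u; lia.
    apply/(lel_char hsv hsu).
    have := (dK_char hsv hsu).1 (proj2 (proj2 (hall v u hu))).
    have := hmin u. move/leP. rewrite /key.
    have := hmiss u; have := hmiss v; have := nxt_spec hsu; have := nxt_spec hsv.
    have := K3.
    case: (Z.ltb_spec c0 (g u)); case: (Z.ltb_spec c0 (g v)); lia.
  + move/not_all_ex_not => [v hv].
    have [u [hu hcu]] : exists u, e v u /\ ~ correct e g v u.
    { apply: NNPP => hh; apply: hv => u hu; apply: NNPP => hc; apply: hh; by exists u. }
    case: (Z.lt_ge_cases 0 (g v)) => hv0.
    * exists v; right; right; split => //; rewrite /in_init; lia.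
    * case: (Z.lt_ge_cases 0 (g u)) => hu0.
      -- exists u; right; right; split; last by rewrite /in_init; lia.
         move=> hT; apply: hcu; apply: correct_sym; apply: hT; by rewrite e_sym.
      -- exfalso; apply: hcu.
         have h1 : g v = 0 by have := hge v; lia.
         have h2 : g u = 0 by have := hge u; lia.
         rewrite /correct /in_stab /dK h1 h2 /=; have := K3; split; [lia|split;[lia|]].
         rewrite Zmod_0_l; lia.
Qed.


Lemma trans_valid g g' v : valid g -> trans g g' v -> - n <= g' v <= K - 1.
Proof.
move=> hval [->|]; first exact: hval.
have hn1 := n_ge1; have hK3 := K3.
case=> [[_ ->]|[[_ ->]|[_ ->]]].
- case: (Z.lt_ge_cases (g v) 0) => h; first (rewrite phi_neg //; have := hval v; lia).
  have := phi_ge0 h; lia.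
- case: (Z.lt_ge_cases (g v) 0) => h; first (rewrite phi_neg //; have := hval v; lia).
  have := phi_ge0 h; lia.
- lia.
Qed.

Lemma last_time (P : nat -> Prop) a b : (a <= b)%nat -> P a -> ~ P b ->
  exists tau, (a <= tau)%nat /\ (tau < b)%nat /\ P tau /\
    forall k, (tau < k)%nat -> (k <= b)%nat -> ~ P k.
Proof.
elim: b => [|b IH] hab hPa hPb.
- have ha : a = 0%nat by apply/eqP; rewrite -leqn0.
  by subst a.
- case: (ltngtP a b.+1) hab => // [hlt|heq] _; last by subst a.
  case: (classic (P b)) => hPb'.
  + exists b; split => //; split => //; split => // k h1 h2.
    have -> : k = b.+1 by apply/eqP; rewrite eqn_leq h2 h1.
    done.
  + have [tau [h1 [h2 [h3 h4]]]] := IH hlt hPa hPb'.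
    exists tau; split => //; split; first exact: ltnW.
    split => // k hk1 hk2.
    case: (ltngtP k b.+1) hk2 => // [hk|hk] _.
    * exact: h4.
    * by subst k.
Qed.

Lemma const_range (f : nat -> Z) a b : (forall k, (a <= k)%nat -> (k < b)%nat -> f k.+1 = f k) ->
  forall k, (a <= k)%nat -> (k <= b)%nat -> f k = f a.
Proof.
move=> H k hk; elim: k hk => [|k IH] hk hkb.
- have ha : a = 0%nat by apply/eqP; rewrite -leqn0. by subst.
- case: (ltngtP a k.+1) hk => // [hlt|heq] _; last by rewrite heq.
  rewrite H //; first by apply: IH => //; exact: ltnW.
Qed.

Lemma fin_bound (X : finType) (Q : X -> nat -> Prop) :
  (forall x b b', Q x b -> (b <= b')%nat -> Q x b') ->
  (forall x, exists b, Q x b) -> exists B, forall x, Q x B.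
Proof.
move=> hmono hex.
pose f x := proj1_sig (constructive_indefinite_description _ (hex x)).
have hf : forall x, Q x (f x) := fun x => proj2_sig (constructive_indefinite_description _ (hex x)).
exists (\max_(x : X) f x) => x. apply: hmono (hf x) _. exact: leq_bigmax.
Qed.

Lemma EC_lemma (f : nat -> Z) (pot : Z -> nat) k0 :
  (forall k, (k0 <= k)%nat -> (pot (f k.+1) <= pot (f k))%nat /\
     (f k.+1 <> f k -> (pot (f k.+1) < pot (f k))%nat)) ->
  exists k1, (k0 <= k1)%nat /\ forall k, (k1 <= k)%nat -> f k = f k1.
Proof.
move=> H.
have main : forall m k0, (pot (f k0) <= m)%nat ->
  (forall k, (k0 <= k)%nat -> (pot (f k.+1) <= pot (f k))%nat /\
     (f k.+1 <> f k -> (pot (f k.+1) < pot (f k))%nat)) ->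
  exists k1, (k0 <= k1)%nat /\ forall k, (k1 <= k)%nat -> f k = f k1.
{ elim => [|m IH] k1 hm H1.
  - exists k1; split => // k hk. apply: (const_range (b := k)) => // j hj _.
    apply: NNPP => hne. have := (H1 j hj).2 hne.
    have : (pot (f j) <= 0)%nat.
    { elim: j hj {hne} => [|j IHj] hj.
      + by move: hj; rewrite leqn0 => /eqP hj; subst k1.
      + rewrite leq_eqVlt in hj; case/orP: hj => [/eqP <- //|hj].
        apply: leq_trans (H1 j hj).1 (IHj hj). }
    by rewrite leqn0 => /eqP ->; rewrite ltn0.
  - case: (classic (forall k, (k1 <= k)%nat -> f k.+1 = f k)) => [hall|].
    + exists k1; split => // k hk. apply: (const_range (b := k)) => // j hj _; exact: hall.
    + move=> hn. have [k hk] := not_all_ex_not _ _ hn.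
      have [hk1 hne] := imply_to_and _ _ hk.
      have hle : (pot (f k) <= pot (f k1))%nat.
      { elim: k hk1 {hk hne} => [|j IHj] hj.
        + by move: hj; rewrite leqn0 => /eqP hj; subst k1.
        + rewrite leq_eqVlt in hj; case/orP: hj => [/eqP <- //|hj].
          apply: leq_trans (H1 j hj).1 (IHj hj). }
      have hlt := (H1 k hk1).2 hne.
      have H2 : forall j, (k.+1 <= j)%nat -> (pot (f j.+1) <= pot (f j))%nat /\
         (f j.+1 <> f j -> (pot (f j.+1) < pot (f j))%nat).
      { move=> j hj; apply: H1; exact: leq_trans hk1 (ltnW hj). }
      have hm2 : (pot (f k.+1) <= m)%nat.
      { rewrite -ltnS; exact: leq_trans hlt (leq_trans hle hm). }
      have [k2 [hk2 hc]] := IH k.+1 hm2 H2.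
      exists k2; split => //; exact: leq_trans hk1 (ltnW hk2). }
exact: main (leqnn _) H.
Qed.

Section Exec.
Variables (c : nat -> config T) (sq : nat -> {set T}).
Hypothesis exec : execution_did e c sq.
Hypothesis valid0 : valid (c 0).

Lemma exec_trans k v : trans (c k) (c k.+1) v.
Proof.
case: (exec k) => [[_ [_ [hA hN]]]|[_ [_ ->]]]; last by left.
case: (boolP (v \in sq k)) => hv; first by right; apply: hA.
by left; apply: hN.
Qed.

Lemma exec_inS k v : c k.+1 v <> c k v -> v \in sq k.
Proof.
case: (exec k) => [[_ [_ [hA hN]]]|[_ [_ ->]]] //.
case: (boolP (v \in sq k)) => // hv h; exfalso; apply: h; exact: hN.
Qed.

Lemma valid_all k : valid (c k).
Proof.
elim: k => [|k IH] //. move=> v; apply: trans_valid IH (exec_trans k v).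
Qed.

Definition evt v t := 0 < c t v /\ c t.+1 v < 0.

Definition Par u s v t := e u v /\ (s < t)%nat /\ evt u s /\ evt v t /\
  forall k, (s < k)%nat -> (k <= t)%nat -> c k u < 0.

Lemma evt_n v t : evt v t -> c t.+1 v = - n.
Proof. move=> [h1 h2]. have := drop (exec_trans t v) h2. lia. Qed.

Lemma noPosR v u a b : e v u -> (a <= b)%nat ->
  (forall k, (a <= k)%nat -> (k < b)%nat -> c k u < 0) -> c a v <= 0 -> c b v <= 0.
Proof.
move=> evu; elim: b => [|b IH] hab hneg ha.
- have h : a = 0%nat by apply/eqP; rewrite -leqn0. by subst.
- case: (ltngtP a b.+1) hab => // [hlt|heq] _; last by subst.
  apply: noPos (exec_trans b v) evu _ _.
  + exact: hneg.
  + apply: IH => // k h1 h2; apply: hneg => //; exact: ltnW.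
Qed.

Lemma frozen u s v t : Par u s v t -> forall k, (s < k)%nat -> (k <= t.+1)%nat -> c k u = - n.
Proof.
move=> [euv [hst [hu [hv hneg]]]].
have hpos : forall k, (s < k)%nat -> (k <= t)%nat -> 0 < c k v.
{ move=> k h1 h2; apply: NNPP => hk.
  have : c t v <= 0.
  { apply: (@noPosR v u k t) => //; first by rewrite -e_sym.
    - move=> k' h1' h2'; apply: hneg; [exact: leq_trans h1 h1'|exact: ltnW].
    - lia. }
  move: hv => [hv _]; lia. }
have hc : forall k, (s.+1 <= k)%nat -> (k < t.+1)%nat -> c k.+1 u = c k u.
{ move=> k h1 h2. apply: frozen_step (valid_all k) (exec_trans k u) euv _ _.
  - exact: hneg.
  - exact: hpos. }
move=> k h1 h2. rewrite (const_range hc h1 h2). exact: evt_n.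
Qed.

Lemma Clem u s v t : Par u s v t -> forall k, (t < k)%nat ->
  (forall k', (t < k')%nat -> (k' <= k)%nat -> c k' v <= 0) -> c k u <= c k v + 1.
Proof.
move=> hP; elim => [|k IH] // hk hneg.
rewrite ltnS leq_eqVlt in hk; case/orP: hk => [/eqP heq|hlt]; last first.
- apply: (localC (valid_all k) (valid_all k.+1) (exec_trans k u) (exec_trans k v)).
  + by case: hP.
  + apply: hneg => //.
  + apply: hneg => //; exact: ltnW.
  + apply: IH => // k' h1 h2; apply: hneg => //; exact: leq_trans h2 _.
- subst k. rewrite (frozen hP) //; last by case: hP => [_ [h _]]; exact: ltnW.
  have := valid_all t.+1 v. lia.
Qed.


Lemma evt_reInit v t : evt v t -> reInit e (c t) v.
Proof.
move=> [h1 h2]. case: (exec_trans t v) => [h|]; first lia.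
case=> [[_ h]|[[_ h]|[h _]]] //.
- have := phi_ge0 (Z.lt_le_incl _ _ h1); lia.
- have := phi_ge0 (Z.lt_le_incl _ _ h1); lia.
Qed.

Lemma parent v t t' : evt v t -> evt v t' -> (t' < t)%nat -> exists u s, Par u s v t.
Proof.
move=> hv hv' htt.
have [tau [h1 [h2 [h3 h4]]]] := @last_time (fun k => c k v <= 0) t'.+1 t htt
  (Z.lt_le_incl _ _ (proj2 hv')) (ltac:(move: (proj1 hv); lia)).
have hK := K3.
have [w0 [hw0 hnc0]] : exists w, e v w /\ ~ correct e (c t) v w.
{ have [hnT _] := evt_reInit hv. apply: NNPP => hh; apply: hnT => w hw.
  apply: NNPP => hc; apply: hh; by exists w. }
have hpos1 : 0 < c tau.+1 v by have := h4 tau.+1 (ltnSn _) h2; lia.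
have hN : etapeNorm e (c tau) v /\ c tau.+1 v = phi e (c tau v).
{ case: (exec_trans tau v) => [h|]; first lia.
  case=> [//|[[[hC _] h]|[_ h]]].
  - rewrite h phi_neg in hpos1; rewrite /in_init_star in hC; lia.
  - have := n_ge1; lia. }
have hv0 : c tau v = 0.
{ have := (proj1 (proj1 hN)) w0 hw0. rewrite /correct /in_stab. lia. }
have hval := valid_all.
have J : forall k, (tau <= k)%nat -> (k <= t)%nat ->
  forall w, e v w -> c k w < 0 \/ correct e (c k) v w.
{ elim => [|k IH] hk hkt w hw.
  - have h0 : tau = 0%nat by apply/eqP; rewrite -leqn0.
    subst tau; right; exact: (proj1 (proj1 hN)).
  - case: (ltngtP tau k.+1) hk => // [hlt|heq] _; last first.
    { subst tau; right; exact: (proj1 (proj1 hN)). }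
    have hk' : (tau <= k)%nat by [].
    have hvk : 0 <= c k v <= K - 1.
    { case: (ltngtP tau k) hk' => // [hl|he] _.
      - have := h4 k hl (ltnW hkt); have := hval k v; lia.
      - subst k; lia. }
    have hvk1 : 0 < c k.+1 v by have := h4 k.+1 hlt hkt; lia.
    case: (IH hk' (ltnW hkt) w hw) => [hneg|hcor].
    + left. case: (ltngtP tau k) hk' => // [hl|he] _.
      * rewrite (frozen_step (v:=v) (hval k) (exec_trans k w) _ hneg) //; first by rewrite e_sym.
        have := h4 k hl (ltnW hkt); lia.
      * subst k. have := (proj1 (proj1 hN)) w hw. rewrite /correct /in_stab. lia.
    + case: (Z.lt_ge_cases (c k.+1 w) 0) => hw1; first by left.
      right. have hcor2 := hcor. apply: good_pres hw hcor2 _ _.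
      * apply: stab_keep (exec_trans k v) hvk _; lia.
      * apply: stab_keep (exec_trans k w) _ hw1.
        move: hcor; rewrite /correct /in_stab; lia. }
have [hwneg|] := J t (ltnW h2) (leqnn t) w0 hw0; last by [].
have hw0tau : 0 <= c tau w0.
{ have := (proj1 (proj1 hN)) w0 hw0. rewrite /correct /in_stab. lia. }
have [s [g1 [g2 [g3 g4]]]] := @last_time (fun k => 0 <= c k w0) tau t (ltnW h2) hw0tau
  (ltac:(simpl; lia)).
have hs1 : c s.+1 w0 < 0 by have := g4 s.+1 (ltnSn _) g2; lia.
have [hs2 _] := drop (exec_trans s w0) hs1 g3.
exists w0, s; split; first by rewrite e_sym.
split => //; split; first by split.
split => // k k1 k2. have := g4 k k1 k2; lia.
Qed.


Lemma Par_evt u s v t : Par u s v t -> evt u s /\ evt v t.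
Proof. by case=> [_ [_ [h1 [h2 _]]]]. Qed.

Lemma Par_uniq u s v t1 t2 : Par u s v t1 -> Par u s v t2 -> t1 = t2.
Proof.
move=> h1 h2.
have key : forall ta tb, Par u s v ta -> Par u s v tb -> ~ (ta < tb)%nat.
{ move=> ta tb [euv [hs [hu [hva hna]]]] [_ [hs' [_ [hvb hnb]]]] hab.
  have : c tb v <= 0.
  { apply: (@noPosR v u ta.+1 tb) => //; first by rewrite -e_sym.
    - move=> k k1 k2; apply: hnb; [exact: ltn_trans hs k1|exact: ltnW].
    - move: hva => [_]; lia. }
  move: hvb => [hvb _]; lia. }
case: (ltngtP t1 t2) => // h; [exfalso; exact: key h1 h2 h|exfalso; exact: key h2 h1 h].
Qed.

Lemma firstB : exists T0, forall v t, evt v t ->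
  (forall t', (t' < t)%nat -> ~ evt v t') -> (t <= T0)%nat.
Proof.
have := @fin_bound T (fun v b => forall t, evt v t ->
  (forall t', (t' < t)%nat -> ~ evt v t') -> (t <= b)%nat).
case.
- move=> x b b' H hb t h1 h2; exact: leq_trans (H t h1 h2) hb.
- move=> x. case: (classic (exists t0, evt x t0)) => [[t0 h0]|hno].
  + exists t0 => t h1 h2. rewrite leqNgt; apply/negP => h; exact: h2 t0 h h0.
  + exists 0%nat => t h1; exfalso; apply: hno; by exists t.
- move=> B HB; exists B => v t; exact: HB.
Qed.

Lemma childB T0 : exists B, forall u s v t, (s <= T0)%nat -> Par u s v t -> (t <= B)%nat.
Proof.
have single : forall s0, exists B, forall u v t, Par u s0 v t -> (t <= B)%nat.
{ move=> s0.
  have := @fin_bound (T * T)%type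
    (fun p b => forall t, Par p.1 s0 p.2 t -> (t <= b)%nat).
  case.
  - move=> x b b' H hb t h; exact: leq_trans (H t h) hb.
  - move=> [u v] /=. case: (classic (exists t0, Par u s0 v t0)) => [[t0 h0]|hno].
    + exists t0 => t h. by rewrite (Par_uniq h h0).
    + exists 0%nat => t h; exfalso; apply: hno; by exists t.
  - move=> B HB; exists B => u v t h; exact: (HB (u, v) t h). }
elim: T0 => [|T0 [B IH]].
- have [B HB] := single 0%nat. exists B => u s v t hs; rewrite leqn0 in hs.
  move/eqP: hs => ->; exact: HB.
- have [B' HB'] := single T0.+1. exists (maxn B B') => u s v t hs h.
  rewrite leq_eqVlt ltnS in hs. case/orP: hs => [/eqP hs|hs].
  + subst s. apply: leq_trans (HB' _ _ _ h) _; exact: leq_maxr.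
  + apply: leq_trans (IH _ _ _ _ hs h) _; exact: leq_maxl.
Qed.

Fixpoint Dp (r : nat) (v : T) (t : nat) : Prop :=
  match r with
  | O => evt v t
  | r'.+1 => exists u s, Par u s v t /\ Dp r' u s
  end.

Lemma Rlem r : exists Tr, forall v t, evt v t -> (Tr < t)%nat -> Dp r.+1 v t.
Proof.
have [T0 HT0] := firstB.
have hpar : forall v t, evt v t -> (T0 < t)%nat -> exists u s, Par u s v t.
{ move=> v t hv ht. apply: NNPP => hno.
  have : (t <= T0)%nat.
  { apply: (HT0 v t hv) => t' h1 h2; apply: hno; exact: parent hv h2 h1. }
  by rewrite leqNgt ht. }
elim: r => [|r [Tr IH]].
- exists T0 => v t hv ht. have [u [s hP]] := hpar v t hv ht.
  exists u, s; split => //; exact: (proj1 (Par_evt hP)).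
- have [B HB] := childB Tr.
  exists (maxn T0 B) => v t hv ht.
  rewrite gtn_max in ht; case/andP: ht => ht1 ht2.
  have [u [s hP]] := hpar v t hv ht1.
  exists u, s; split => //. apply: IH; first exact: (proj1 (Par_evt hP)).
  rewrite ltnNge; apply/negP => hs. have := HB _ _ _ _ hs hP.
  by rewrite leqNgt ht2.
Qed.

Lemma chain m v t : Dp m v t -> exists (W : nat -> T) (Tm : nat -> nat),
  W m = v /\ Tm m = t /\ forall i, (i < m)%nat -> Par (W i) (Tm i) (W i.+1) (Tm i.+1).
Proof.
elim: m v t => [|m IH] v t /=.
- move=> _; exists (fun _ => v), (fun _ => t); split => //.
- move=> [u [s [hP hD]]]. have [W [Tm [h1 [h2 h3]]]] := IH u s hD.
  exists (fun i => if i == m.+1 then v else W i), (fun i => if i == m.+1 then t else Tm i).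
  rewrite eqxx; split => //; split => // i hi.
  have hi' : (i == m.+1) = false by apply/negbTE; rewrite neq_ltn hi.
  rewrite hi'. rewrite ltnS leq_eqVlt in hi. case/orP: hi => [/eqP hi|hi].
  + subst i. rewrite eqxx h1 h2. done.
  + have -> : (i.+1 == m.+1) = false by apply/negbTE; rewrite neq_ltn ltnS hi.
    exact: h3.
Qed.

Lemma chain_bound v t : Dp #|T| v t -> False.
Proof.
move/chain => [W [Tm [_ [_ hP]]]].
set N := #|T| in hP.
have mono : forall a b, (a < b)%nat -> (b <= N)%nat -> (Tm a < Tm b)%nat.
{ move=> a b hab; elim: b hab => [|b IH] // hab hb.
  rewrite ltnS leq_eqVlt in hab. case/orP: hab => [/eqP->|hab].
  - by case: (hP b hb) => [_ [h _]].
  - apply: ltn_trans (IH hab (ltnW hb)) _. by case: (hP b hb) => [_ [h _]]. }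
have D : forall j, (1 <= j)%nat -> (j <= N)%nat -> forall a, (a + j <= N)%nat ->
  forall k, (Tm a < k)%nat -> (k <= Tm (a + j))%nat -> c k (W a) <= - n + Z.of_nat j - 1.
{ elim => [|j IH] // _ hjN a haj k hk1 hk2.
  have hPa : Par (W a) (Tm a) (W a.+1) (Tm a.+1) by apply: hP; rewrite -addn1 (leq_trans _ haj) // leq_add2l.
  case: (leqP k (Tm a.+1).+1) => hk.
  - rewrite (frozen hPa) //. lia.
  - case: j IH hjN haj hk2 => [|j] IH hjN haj hk2.
    + move: hk2; rewrite addn1 => hk2. exfalso. move: (leq_ltn_trans hk2 (ltnW hk)). by rewrite ltnn.
    + have haj' : (a.+1 + j.+1 <= N)%nat by rewrite addSnnS.
      have IH' := IH isT (ltnW hjN) a.+1 haj'.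
      rewrite -addSnnS in hk2.
      have hjn : (Z.of_nat j.+2 <= n) by rewrite /nZ; move/leP: hjN; lia.
      have : c k (W a) <= c k (W a.+1) + 1.
      { apply: (Clem hPa (ltnW hk)) => k' h1 h2.
        have := IH' k' h1 (leq_trans h2 hk2). lia. }
      have := IH' k (ltn_trans (ltnSn _) hk) hk2.
      lia. }
have inj : forall a b, (a < b)%nat -> (b <= N)%nat -> W a <> W b.
{ move=> a b hab hb heq.
  have hj1 : (1 <= b - a)%nat by rewrite subn_gt0.
  have hjN : (b - a <= N)%nat by apply: leq_trans (leq_subr _ _) hb.
  have hab' : (a + (b - a))%nat = b by rewrite subnKC // ltnW.
  have ha1 : (a + (b - a) <= N)%nat by rewrite hab'.
  have ha2 : (Tm b <= Tm (a + (b - a)))%nat by rewrite hab'.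
  have := D (b - a)%nat hj1 hjN a ha1 (Tm b) (mono a b hab hb) ha2.
  rewrite heq.
  have hb0 : (b.-1 < N)%nat by apply: leq_trans hb; rewrite prednK // (leq_ltn_trans _ hab).
  have := proj2 (Par_evt (hP b.-1 hb0)). rewrite prednK; last exact: (leq_ltn_trans _ hab).
  move=> [hpos _].
  have : (Z.of_nat (b - a) <= n) by rewrite /nZ; move/leP: hjN; lia.
  lia. }
pose f (i : 'I_N.+1) := W i.
have finj : injective f.
{ move=> i j hij. apply: val_inj => /=. case: (ltngtP i j) => // h.
  - exfalso; apply: (inj i j h _ hij); by rewrite -ltnS.
  - exfalso; apply: (inj j i h _ (esym hij)); by rewrite -ltnS. }
have := leq_card f finj. by rewrite card_ord ltnn.
Qed.

Lemma finite_RA : exists TT, forall t, (TT < t)%nat -> forall v, ~ evt v t.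
Proof.
have [Tr HR] := Rlem (#|T|.-1).
exists Tr => t ht v hv. apply: (@chain_bound v t).
have := HR v t hv ht. by rewrite prednK.
Qed.


Lemma ar_change g w r : valid g -> action_result e g w r -> r <> g w.
Proof.
move=> hval; have hK := K3; have hn1 := n_ge1.
case=> [[_ ->]|[[_ ->]|[[_ hI] ->]]].
- case: (Z.lt_ge_cases (g w) 0) => h; first (rewrite phi_neg; lia).
  have hs : 0 <= g w <= K - 1 by have := hval w; lia.
  rewrite phi_stab //; have := nxt_spec hs; lia.
- case: (Z.lt_ge_cases (g w) 0) => h; first (rewrite phi_neg; lia).
  have hs : 0 <= g w <= K - 1 by have := hval w; lia.
  rewrite phi_stab //; have := nxt_spec hs; lia.
- rewrite /in_init in hI; have := hval w; lia.
Qed.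

Definition noRA TT := forall t, (TT <= t)%nat -> forall v, ~ evt v t.

Lemma nonneg_keep TT k v : noRA TT -> (TT <= k)%nat -> 0 <= c k v -> 0 <= c k.+1 v.
Proof.
move=> hno hk h. apply: NNPP => h'.
have [h1 _] := drop (exec_trans k v) (ltac:(lia)) h.
apply: (hno k hk v); split => //; lia.
Qed.

Definition EC v := exists k1, forall k, (k1 <= k)%nat -> c k v = c k1 v.

Lemma no_stop TT : noRA TT -> forall v k, exists k', (k <= k')%nat /\ c k'.+1 v <> c k' v.
Proof.
move=> hno v0 k0. apply: NNPP => hh.
have hc0 : forall k, (k0 <= k)%nat -> c k.+1 v0 = c k v0.
{ move=> k hk; apply: NNPP => hne; apply: hh; by exists k. }
have EC0 : EC v0.
{ exists k0 => k hk. apply: (@const_range (fun j => c j v0) k0 k) => // j hj _; exact: hc0. }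
have hK := K3. have hn1 := n_ge1.
have prop : forall v u, EC v -> e v u -> EC u.
{ move=> v u [k1 hk1] evu.
  have euv : e u v by rewrite e_sym.
  pose x := c k1 v.
  pose pot y := if y <? 0 then (Z.to_nat (- y) + 2)%nat
                else if y =? x then 1%nat else if x =? nxt y then 2%nat else 0%nat.
  suff Hpot : forall k, (maxn k1 TT <= k)%nat -> (pot (c k.+1 u) <= pot (c k u))%nat /\
     (c k.+1 u <> c k u -> (pot (c k.+1 u) < pot (c k u))%nat).
  { have [k2 [_ hk2]] := @EC_lemma (fun k => c k u) pot (maxn k1 TT) Hpot.
    by exists k2. }
  move=> k; rewrite geq_max => /andP [hka hkb].
  have hvx : c k v = x by rewrite /x hk1.
  case: (exec_trans k u) => [->|]; first by split => //; rewrite ltnn.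
  move=> hact.
  case: (Z.lt_ge_cases (c k u) 0) => hu.
  - have hnew : c k.+1 u = c k u + 1.
    { case: hact => [[[hT _] ->]|[[_ ->]|[[_ hI] ->]]].
      + have := hT v euv; rewrite /correct /in_stab; lia.
      + by rewrite phi_neg.
      + exfalso; apply: hI; rewrite /in_init; have := valid_all k u; lia. }
    rewrite hnew /pot. zif; (split; [|move=> ?]); lia.
  - have hu1 := nonneg_keep hno hkb hu.
    have hsu : 0 <= c k u <= K - 1 by have := valid_all k u; lia.
    case: (stab_keep (exec_trans k u) hsu hu1) => [->|[[hT hL] hnew]].
    + by split => //; rewrite ltnn.
    + have := hT v euv; rewrite /correct /in_stab => -[_ [hsv _]].
      have := (lel_char hsu hsv).1 (hL v euv). rewrite hnew phi_stab // hvx.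
      have hn : 0 <= nxt (c k u) <= K - 1 by have := nxt_spec hsu; lia.
      have := nxt_spec hn; have := nxt_spec hsu.
      rewrite /pot. move: (nxt (nxt (c k u))) (nxt (c k u)) => nn n1.
      move=> hs1 hs2 hcase.
      zif; (split; [|move=> ?]); lia. }
have ECall : forall w, EC w.
{ move=> w. case/connectP: (e_conn v0 w) => p hp ->.
  elim: p v0 EC0 hp {hc0 hh} => [|y p IH] v EC0 //=.
  case/andP => h1 h2. apply: IH h2. exact: prop EC0 h1. }
have hmono : forall w b b', (forall k, (b <= k)%nat -> c k w = c b w) -> (b <= b')%nat ->
  forall k, (b' <= k)%nat -> c k w = c b' w.
{ move=> w b b' H hb k hk. rewrite H; last exact: leq_trans hb hk.
  by rewrite H. }
have [B HB] := @fin_bound T (fun w b => forall k, (b <= k)%nat -> c k w = c b w) hmono ECall.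
have [v hen] := DF (valid_all B).
  case: (exec B) => [[hS [_ [hA _]]]|[hT _]]; last exact: hT v hen.
  case/set0Pn: hS => w hw.
  apply: (ar_change (valid_all B) (hA w hw)).
  rewrite (HB w B.+1) //.
Qed.

Definition Leg (g : config T) := forall v, 0 <= g v <= K - 1 /\ tousCorrects e g v.

Lemma converge TT : noRA TT -> exists i, Leg (c i).
Proof.
move=> hno. have hK := K3.
pose P k v := 0 <= c k v <= K - 1 /\ tousCorrects e (c k) v.
have pers : forall k v, (TT <= k)%nat -> P k v -> P k.+1 v.
{ move=> k v hk [hs hT].
  have hv1 := nonneg_keep hno hk (proj1 hs).
  have hkv := stab_keep (exec_trans k v) hs hv1.
  split.
  - case: hkv => [->|[_ ->]] //. exact: phi_ge0 (proj1 hs).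
  - move=> w hw. have hc := hT w hw. have hc2 := hc.
    move: hc2; rewrite /correct /in_stab => -[_ [hsw _]].
    apply: good_pres hw hc hkv _.
    have hsw' := hsw.
    apply: stab_keep (exec_trans k w) hsw _. apply: (nonneg_keep hno hk); lia. }
have ev : forall v, exists k, (TT <= k)%nat /\ P k v.
{ move=> v. apply: NNPP => hh.
  pose pot y := if y <? 0 then Z.to_nat (- y) else 0%nat.
  suff Hpot : forall k, (TT <= k)%nat -> (pot (c k.+1 v) <= pot (c k v))%nat /\
     (c k.+1 v <> c k v -> (pot (c k.+1 v) < pot (c k v))%nat).
  { have [k1 [hk1 hc]] := @EC_lemma (fun k => c k v) pot TT Hpot.
    have [k' [hk' hne]] := no_stop hno v k1. apply: hne.
    rewrite (hc k'.+1) ?(hc k') //; exact: leqW. }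
  - move=> k hk.
    case: (exec_trans k v) => [->|hact]; first by split => //; rewrite ltnn.
    case: (Z.lt_ge_cases (c k v) 0) => hv.
    + have hnew : c k.+1 v = c k v + 1.
      { case: hact => [[_ ->]|[[_ ->]|[[_ hI] ->]]]; try by rewrite phi_neg.
        exfalso; apply: hI; rewrite /in_init; have := valid_all k v; lia. }
      rewrite hnew /pot. zif; (split; [|move=> ?]); lia.
    + exfalso. apply: hh. exists k; split => //.
      have hsu : 0 <= c k v <= K - 1 by have := valid_all k v; lia.
      have hv1 := nonneg_keep hno hk hv.
      case: (stab_keep (exec_trans k v) hsu hv1) => [h|[[hT _] _]].
      * exfalso; exact: (ar_change (valid_all k) hact h).
      * by split. }
suff [B HB] : exists B, forall v k, (B <= k)%nat -> P k v.
{ exists B => v; exact: HB v B (leqnn B). }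
apply: (@fin_bound T (fun v b => forall k, (b <= k)%nat -> P k v)).
- move=> v b b' H hb k hk; apply: H; exact: leq_trans hb hk.
- move=> v. have [k [hk hP]] := ev v. exists k => k' hk'.
  elim: k' hk' => [|k' IH] hk'.
  + by move: hk'; rewrite leqn0 => /eqP <-.
  + rewrite leq_eqVlt in hk'. case/orP: hk' => [/eqP <-|hk'] //.
    apply: pers; last exact: IH.
    exact: leq_trans hk hk'.
Qed.


Lemma leg_nonneg g g' v : Leg g -> trans g g' v -> 0 <= g' v.
Proof.
move=> hL [->|]; first by have := hL v; lia.
case=> [[_ ->]|[[_ ->]|[[hnT _] _]]].
- exact: (proj1 (phi_ge0 (proj1 (proj1 (hL v))))).
- exact: (proj1 (phi_ge0 (proj1 (proj1 (hL v))))).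
- by exfalso; apply: hnT; exact: (proj2 (hL v)).
Qed.

Lemma Leg_all : Leg (c 0) -> forall k, Leg (c k).
Proof.
move=> hL0; elim => [|k IH] // v.
have [hs hT] := IH v.
have hkv := stab_keep (exec_trans k v) hs (leg_nonneg IH (exec_trans k v)).
split.
- case: hkv => [->|[_ ->]] //. exact: phi_ge0 (proj1 hs).
- move=> w hw. have hc := hT w hw.
  apply: good_pres hw hc hkv _.
  apply: stab_keep (exec_trans k w) (proj1 (IH w)) (leg_nonneg IH (exec_trans k w)).
Qed.

Lemma Leg_noRA : Leg (c 0) -> noRA 0.
Proof.
move=> hL t _ v [_ h]. have := leg_nonneg (Leg_all hL t) (exec_trans t v). lia.
Qed.

Lemma first_true (P : nat -> Prop) k k' : (k <= k')%nat -> P k' ->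
  exists k'', (k <= k'')%nat /\ P k'' /\ forall j, (k <= j)%nat -> (j < k'')%nat -> ~ P j.
Proof.
move=> hk hP. have [d hd] : exists d, k' = (k + d)%nat by exists (k' - k)%nat; rewrite subnKC.
subst k'.
elim: d k {hk} hP => [|d IH] k hP.
- exists k; rewrite addn0 in hP; split => //; split => // j h1 h2.
  by move: (leq_ltn_trans h1 h2); rewrite ltnn.
- case: (classic (P k)) => hPk.
  + exists k; split => //; split => // j h1 h2.
    by move: (leq_ltn_trans h1 h2); rewrite ltnn.
  + rewrite addnS -addSn in hP. have [k'' [h1 [h2 h3]]] := IH k.+1 hP.
    exists k''; split; first exact: ltnW.
    split => // j hj1 hj2. rewrite leq_eqVlt in hj1. case/orP: hj1 => [/eqP <- //|hj1].
    exact: h3.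
Qed.

Lemma liveness : Leg (c 0) -> forall v p, 0 <= p <= K - 1 -> forall i,
  exists j, (i <= j)%nat /\ c j v = p /\ v \in sq j.
Proof.
move=> hL0 v p hp. have hK := K3.
have hno := Leg_noRA hL0.
pose m k := Z.to_nat (if c k v <=? p then p - c k v else p - c k v + K).
suff : forall M i, (m i <= M)%nat -> exists j, (i <= j)%nat /\ c j v = p /\ v \in sq j.
{ move=> H i; exact: H (m i) i (leqnn _). }
elim => [|M IH] i hm.
all: have [k0 [hk0 hne0]] := no_stop hno v i.
all: have [k' [hk' [hne hmin]]] := @first_true (fun j => c j.+1 v <> c j v) i k0 hk0 hne0.
all: have hconst : c k' v = c i v by
  apply: (@const_range (fun j => c j v) i k') => // j h1 h2; apply: NNPP; exact: hmin.
all: have hin := exec_inS hne.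
all: have hsv : 0 <= c i v <= K - 1 by have := proj1 (Leg_all hL0 i v).
all: case: (Z.eq_dec (c i v) p) => hy; first by exists k'; rewrite hconst hy.
- exfalso. move: hm; rewrite /m. zif; lia.
- have hnew : c k'.+1 v = nxt (c i v).
  { have hs' := proj1 (Leg_all hL0 k' v).
    case: (stab_keep (exec_trans k' v) hs' (leg_nonneg (Leg_all hL0 k') (exec_trans k' v))).
    + by move=> h; exfalso; apply: hne.
    + by move=> [_ ->]; rewrite phi_stab // hconst. }
  have [j [hj1 hj2]] := IH k'.+1 (ltac:(move: hm; rewrite /m hnew; have := nxt_spec hsv; zif; lia)).
  exists j; split => //. apply: leq_trans hj1. exact: leq_trans hk' (leqnSn _).
Qed.

End Exec.

Lemma near_lem g : Leg g -> forall k u w, reach e k u w ->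
  exists z q, - Z.of_nat k <= z <= Z.of_nat k /\ g w - g u = z + q * K.
Proof.
move=> hL; elim => [|k IH] u w.
- move=> /= /eqP ->; exists 0, 0; lia.
- rewrite reachS; case/orP => [h|/existsP [x /andP [h1 h2]]].
  + have [z [q [hz hq]]] := IH u w h. exists z, q; lia.
  + have [z [q [hz hq]]] := IH u x h1.
    have [hsx [hsw hd]] := proj2 (hL x) w h2.
    have := (dK_char hsx hsw).1 hd. have := nxt_spec hsx; have := nxt_spec hsw.
    move=> n1 n2 hc.
    case: (Z.eq_dec (g w) (g x)) => [e1|ne1].
    { exists z, q; lia. }
    case: (Z.eq_dec (g w) (nxt (g x))) => [e2|ne2].
    { case: n2 => [[a1 a2]|[a1 a2]].
      - exists (z + 1), (q - 1). lia.
      - exists (z + 1), q. lia. }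
    case: n1 => [[a1 a2]|[a1 a2]].
    - exists (z - 1), (q + 1). lia.
    - exists (z - 1), q. lia.
Qed.

End Arith.


Lemma nob (b : N) : nat_of_bin b = N.to_nat b.
Proof. elim/N.peano_ind: b => // b IH. rewrite Nnat.N2Nat.inj_succ -IH.
case: b {IH} => //= p. exact: nat_of_succ_pos. Qed.

Lemma safety_arith (n D iv iw z q : Z) : (1 <= D)%Z -> (0 <= iv <= n-1)%Z -> (0 <= iw <= n-1)%Z -> iv <> iw ->
  (-D <= z <= D)%Z -> (2*D*iw - 2*D*iv = z + q*((2*n-1)*(D+1)+2))%Z -> False.
Proof.
move=> hD hiv hiw hne hz hq.
set K := ((2*n-1)*(D+1)+2)%Z in hq.
have hK : K = (2*n*D + 2*n - D + 1)%Z by rewrite /K; ring.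
have hdelta : (-(2*D*(n-1)) <= 2*D*iw - 2*D*iv <= 2*D*(n-1))%Z by nia.
have hdel2 : (2*D <= 2*D*iw - 2*D*iv \/ 2*D*iw - 2*D*iv <= -(2*D))%Z.
{ destruct (Z.lt_ge_cases iv iw) as [h|h]; [left|right]; nia. }
destruct (Z.lt_total q 0) as [h|[h|h]].
- have : (q * K <= - K)%Z by nia. lia.
- subst q. lia.
- have : (q * K >= K)%Z by nia. lia.
Qed.

Theorem theorem1 (T : finType) (e : rel T)
  (e_sym : symmetric e) (e_irr : irreflexive e)
  (e_conn : forall u v : T, connect e u v)
  (ident : T -> 'I_#|T|) (ident_inj : injective ident) :
  self_stabilizing_EMSS_did e ident.
Proof.
move=> c sq hv0 hex.
case: (posnP #|T|) => [h0|hpos].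
{ exists 0%nat => c' s' _ _. split.
  - move=> i v. exfalso. have : (0 < #|T|)%nat by apply/card_gt0P; exists v.
    by rewrite h0.
  - move=> v. exfalso. have : (0 < #|T|)%nat by apply/card_gt0P; exists v.
    by rewrite h0. }
have hv0' : valid e (c 0) := hv0.
have [TT HT] := finite_RA hpos e_sym hex hv0'.
have hno : noRA c TT.+1 by move=> t ht v; apply: HT.
have [i hLi] := converge hpos e_sym e_conn hex hv0' hno.
exists i => c' s' h0 hex'.
have hL0 : Leg e (c' 0) by rewrite h0.
have hn1 := n_ge1 hpos. have hK := K3 (e := e) hpos.
have hv0c : valid e (c' 0).
{ move=> v; have := proj1 (hL0 v); lia. }
split.
- move=> j v w hpv hpw. have hLj := Leg_all hpos e_sym hex' hL0 j.
  apply: NNPP => hne.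
  have hr := reach_dist (e_conn v w).
  have [z [q [hz hq]]] := near_lem hpos hLj hr.
  have hdd := dist_diam e v w.
  have hd1 : (0 < dist e v w)%nat.
  { rewrite lt0n; apply/negP => /eqP h. rewrite h in hr. apply: hne. exact/eqP. }
  rewrite /privilege in hpv hpw. rewrite hpv hpw in hq.
  have hid : (ident v : nat) <> ident w.
  { move=> h; apply: hne; apply: ident_inj; exact: val_inj. }
  have hv := ltn_ord (ident v). have hw := ltn_ord (ident w).
  apply: (@safety_arith (nZ T) (Z.of_nat (diam e)) (Z.of_nat (ident v)) (Z.of_nat (ident w)) z q).
  + move/leP: hd1; move/leP: hdd; lia.
  + move/leP: hv; rewrite /nZ; lia.
  + move/leP: hw; rewrite /nZ; lia.
  + lia.
  + move/leP: hdd; lia.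
  + rewrite /KZ in hq; lia.
- move=> v i0.
  have hp : (0 <= 2 * nZ T + 2 * Z.of_nat (diam e) * Z.of_nat (ident v) <= KZ e - 1)%Z.
  { have hv := ltn_ord (ident v). move/leP: hv => hv. rewrite /KZ.
    have : (Z.of_nat (ident v) <= nZ T - 1)%Z by rewrite /nZ; lia.
    have : (0 <= Z.of_nat (diam e))%Z by lia.
    nia. }
  have [j [hj1 [hj2 hj3]]] := liveness hpos e_sym e_conn hex' hv0c hL0 v hp (N.to_nat i0).
  exists (N.of_nat j). split.
  + move/leP: hj1 => hj1. lia.
  + rewrite /executes_cs nob Nnat.Nat2N.id. split => //.
Qed.
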